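(* Let $k$ be a positive integer. If $H$ is a thickened $4k$-path, then $\mathrm{ecrw}(H)\ge k$.
   Context: A thickened $n$-path is the graph obtained from the path on $n$ vertices by replacing each edge by $n$ internally vertex-disjoint paths of length two; explicitly, vertices $u_1,\dots,u_n$ and $v_{i,j}$ ($i\in[n-1]$, $j\in[n]$), with edges $u_iv_{i,j}$ and $u_{i+1}v_{i,j}$. A tree-cut decomposition of a graph $G$ is a pair $\mathcal{T}=(T,\{X_t\}_{t\in V(T)})$ where $T$ is a tree and the bags $X_t\subseteq V(G)$ are pairwise disjoint (possibly empty) with $\bigcup_{t\in V(T)}X_t=V(G)$. For a node $t$ of $T$, let $T_1,\dots,T_m$ be the connected components of $T-t$ and $Z_i=\bigcup_{s\in V(T_i)}X_s$; $\mathrm{cross}_{\mathcal{T}}(t)$ is the number of edges of $G$ whose two endpoints lie in two distinct sets among $Z_1,\dots,Z_m$ (if $T$ has one node, $\mathrm{cross}_{\mathcal T}(t)=0$). The crossing number of $\mathcal{T}$ is $\max_{t}\mathrm{cross}_{\mathcal{T}}(t)$, and the thickness of $\mathcal{T}$ is $\max_t|X_t|$. The edge-crossing width of $\mathcal T$ is the maximum of its crossing number and its thickness, and $\mathrm{ecrw}(G)$ is the minimum edge-crossing width over all tree-cut decompositions of $G$. *)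

(* Defs.v *)
From mathcomp Require Import all_boot.
From mathcomp Require Import boolp.

Set Implicit Arguments.
Unset Strict Implicit.
Unset Printing Implicit Defensive.

(* A simple graph is given by a vertex finType V and a symmetric
   irreflexive adjacency relation e : rel V. *)

(* Vertices: inl a  = u_{a+1}  (a < n),
             inr (b, j) = v_{b+1, j+1}  (b < n-1, j < n).
   Edges: u_i v_{i,j} and u_{i+1} v_{i,j}. *)
Definition tp_vertex (n : nat) : finType := ('I_n + ('I_n.-1 * 'I_n))%type.

Definition tp_uv n (a : 'I_n) (bj : 'I_n.-1 * 'I_n) : bool :=
  (nat_of_ord a == nat_of_ord bj.1) || (nat_of_ord a == (nat_of_ord bj.1).+1).

Definition thickened_path_adj (n : nat) : rel (tp_vertex n) :=
  fun x y =>
    match x, y with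
    | inl a, inr bj => tp_uv a bj
    | inr bj, inl a => tp_uv a bj
    | _, _ => false
    end.

Arguments thickened_path_adj n : clear implicits.

Definition acyclic (T : finType) (r : rel T) : Prop :=
  forall (x : T) (p : seq T),
    path r x p -> uniq (x :: p) -> 2 <= size p -> ~~ r (last x p) x.

Definition is_tree (T : finType) (r : rel T) : Prop :=
  [/\ 0 < #|T|, irreflexive r, symmetric r,
      (forall a b : T, connect r a b) & acyclic r].

Record tcd (V : finType) := TCD {
  tnode : finType;
  tadj  : rel tnode;
  bag   : tnode -> {set V} }.

Definition tcd_valid (V : finType) (D : tcd V) : Prop :=
  [/\ is_tree (@tadj V D),
      (forall s1 s2 : tnode D, s1 != s2 -> [disjoint bag s1 & bag s2]) &
      \bigcup_(s : tnode D) bag s = [set: V]].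

Definition tadj_minus (V : finType) (D : tcd V) (t : tnode D) : rel (tnode D) :=
  fun a b => [&& tadj a b, a != t & b != t].

(* x and y lie in two distinct sets among Z_1, ..., Z_m, where the Z_i are
   the unions of the bags over the components of T - t. *)
Definition separated (V : finType) (D : tcd V) (t : tnode D) (x y : V) : bool :=
  [exists s1 : tnode D, exists s2 : tnode D,
     [&& s1 != t, s2 != t, x \in bag s1, y \in bag s2
       & ~~ connect (tadj_minus t) s1 s2]].

(* cross_T(t): number of edges of G (unordered pairs {x,y} with e x y)
   whose endpoints lie in two distinct Z_i's. *)
Definition cross (V : finType) (e : rel V) (D : tcd V) (t : tnode D) : nat :=
  #|[set E : {set V} | [exists x : V, exists y : V,
        [&& e x y, E == [set x; y] & separated t x y]]]|.

Definition crossing_number (V : finType) (e : rel V) (D : tcd V) : nat :=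
  \max_(t : tnode D) cross e t.

Definition thickness (V : finType) (D : tcd V) : nat :=
  \max_(t : tnode D) #|bag t|.

Definition ecr_width (V : finType) (e : rel V) (D : tcd V) : nat :=
  maxn (crossing_number e D) (thickness D).

Definition achievable_width (V : finType) (e : rel V) : pred nat :=
  fun m => `[< exists D : tcd V, tcd_valid D /\ ecr_width e D = m >].

Definition trivial_tcd (V : finType) : tcd V :=
  @TCD V unit (fun _ _ => false) (fun _ => [set: V]).

Lemma trivial_tcd_valid (V : finType) : tcd_valid (trivial_tcd V).
Proof.
split.
- split; rewrite ?card_unit //;
    try (by move=> [] []); try (by move=> x [|y p]);
    try (by move=> [] []; apply: connect0).
- by move=> [] [] /eqP.
- apply/setP=> v; rewrite in_setT; apply/bigcupP; by exists tt.
Qed.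

Lemma achievable_width_ex (V : finType) (e : rel V) :
  exists m, achievable_width e m.
Proof.
exists (ecr_width e (trivial_tcd V)); apply/asboolP.
by exists (trivial_tcd V); split => //; apply: trivial_tcd_valid.
Qed.

Definition ecrw (V : finType) (e : rel V) : nat :=
  ex_minn (achievable_width_ex e).

(* Main.v *)
Require Import Defs.
From mathcomp Require Import all_boot.
From mathcomp Require Import zify boolp.

Section Tree.
Variables (V : finType) (D : tcd V).
Hypothesis symr : symmetric (@tadj V D).
Hypothesis acyc : acyclic (@tadj V D).
Local Notation r := (@tadj V D).
Local Notation rm := (@tadj_minus V D).

Lemma rm_sym t : symmetric (rm t).
Proof. by move=> a b; rewrite /tadj_minus symr; case: (a != t); case: (b != t). Qed.

Lemma rm_notin t x p : path (rm t) x p -> t \notin p.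
Proof.
elim: p x => [//|y p IH] x /= /andP[/and3P[_ _ yt] /IH].
by rewrite inE eq_sym (negbTE yt).
Qed.

Lemma rm_sub t x p : path (rm t) x p -> path r x p.
Proof. by apply: sub_path => a b /and3P[]. Qed.

Arguments rm_sub [t x p].
Arguments rm_notin [t x p].

Lemma cyc x z y rest : path r x (y :: rest) -> x \notin (y :: rest) ->
  last x (y :: rest) = z -> r z x -> y != z -> False.
Proof.
move=> /= /andP[rxy py] xn hl rzx yz.
case: (shortenP py) hl => p' pp' up' sp' hl.
have ux : uniq (x :: y :: p').
  rewrite cons_uniq up' andbT inE negb_or.
  move: xn; rewrite inE negb_or => /andP[-> xr] /=.
  by apply/negP => /sp'; apply/negP.
have pth : path r x (y :: p') by rewrite /= rxy pp'.
have sz : 2 <= size (y :: p').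
  case: p' {pp' up' sp' ux pth} hl => [|w p''] //= hl.
  by move: yz; rewrite hl eqxx.
by move: (acyc x (y :: p') pth ux sz); rewrite /= hl rzx.
Qed.

Lemma last_in (y : tnode D) P : P != [::] -> last y P \in P.
Proof. by case: P => // z P _; rewrite /= mem_last. Qed.

Lemma interior s1 y P s2 : path r s1 (y :: P) -> uniq (s1 :: y :: P) ->
  last s1 (y :: P) = s2 -> P != [::] -> ~~ connect (rm y) s1 s2.
Proof.
move=> pth un hl Pn; apply/negP.
rewrite (sym_connect_sym (@rm_sym y)) => /connectP[R pR hR].
move: pth un hl => /= /andP[rs1y pyP] /andP[s1n /andP[yn uP]] hl.
case: P Pn pyP yn uP hl s1n => [//|y' P''] _ pyP yn uP hl s1n.
rewrite /= in hl.
apply: (@cyc y s1 y' (P'' ++ R)).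
- rewrite -cat_cons cat_path pyP /= hl; exact: rm_sub pR.
- rewrite -cat_cons mem_cat negb_or yn /=; exact: rm_notin pR.
- by rewrite -cat_cons last_cat /= hl.
- exact: rs1y.
- by apply/negP => /eqP ey; move: s1n; rewrite ey !inE eqxx orbT.
Qed.

Lemma adjacent s1 s2 s : r s1 s2 -> s != s1 -> s != s2 ->
  connect (rm s1) s s2 -> connect (rm s2) s s1 -> False.
Proof.
move=> r12 ss1 ss2.
rewrite (sym_connect_sym (@rm_sym s1)) => /connectP[Q pQ hQ] /connectP[R pR hR].
case: (shortenP pQ) hQ => Q' pQ' uQ' sQ' hQ.
case: Q' pQ' uQ' sQ' hQ => [|y Q''] pQ' uQ' sQ' hQ.
  by move: ss2; rewrite hQ eqxx.
apply: (@cyc s2 s1 y (Q'' ++ R)).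
- rewrite -cat_cons cat_path (rm_sub pQ') -hQ; exact: rm_sub pR.
- rewrite -cat_cons mem_cat negb_or.
  by move: uQ' => /= /andP[-> _]; exact: rm_notin pR.
- by rewrite -cat_cons last_cat -hQ -hR.
- exact: r12.
- apply/negP => /eqP ey; have := rm_notin pQ; rewrite -ey.
  by move/negP; apply; apply: sQ'; rewrite inE eqxx.
Qed.

End Tree.

Section Main.
Variable k : nat.
Hypothesis hk : 0 < k.
Local Notation N := (4 * k).
Local Notation V := (tp_vertex N).
Local Notation e := (thickened_path_adj N).
Variable D : tcd V.
Hypothesis hD : tcd_valid D.
Hypothesis hbag : forall t, #|@bag _ D t| < k.
Hypothesis hcr : forall t, @cross _ e D t < k.

Definition inCS (t : tnode D) (E : {set V}) : bool := [exists x : V, exists y : V,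
        [&& e x y, E == [set x; y] & @separated _ D t x y]].
Definition CS (t : tnode D) := [set E : {set V} | inCS t E].

Lemma loc_ex x : exists s, x \in @bag _ D s.
Proof.
case: hD => _ _ cov; have : x \in \bigcup_s @bag _ D s by rewrite cov inE.
by case/bigcupP => s _ xs; exists s.
Qed.

Lemma card_bag_le t (f : 'I_N -> V) (P : {set 'I_N}) : injective f ->
  (forall j, j \in P -> f j \in @bag _ D t) -> #|P| <= #|@bag _ D t|.
Proof.
move=> inj h; rewrite -(card_imset P inj); apply: subset_leq_card.
by apply/subsetP => _ /imsetP[j jP ->]; exact: h.
Qed.

Lemma card_cs_le t (f : 'I_N -> {set V}) (P : {set 'I_N}) : injective f ->
  (forall j, j \in P -> inCS t (f j)) -> #|P| <= @cross _ e D t.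
Proof.
move=> inj h; rewrite -(card_imset P inj); apply: subset_leq_card.
by apply/subsetP => _ /imsetP[j jP ->]; rewrite inE; exact: h.
Qed.

Lemma leqU (A B : {set 'I_N}) : #|A :|: B| <= #|A| + #|B|.
Proof. by rewrite cardsU leq_subr. Qed.

Lemma count4 (P1 P2 P3 P4 : {set 'I_N}) :
  (forall j, [|| j \in P1, j \in P2, j \in P3 | j \in P4]) ->
  N <= #|P1| + #|P2| + #|P3| + #|P4|.
Proof.
move=> h.
have : #|[set: 'I_N]| <= #|P1 :|: P2 :|: P3 :|: P4|.
  apply: subset_leq_card; apply/subsetP => j _; rewrite !inE.
  by move: (h j); rewrite !orbA.
rewrite cardsT card_ord => /leq_trans; apply.
apply: (leq_trans (leqU _ _)); rewrite leq_add2r.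
apply: (leq_trans (leqU _ _)); rewrite leq_add2r.
exact: leqU.
Qed.

Lemma memCS t x y : e x y -> @separated _ D t x y -> inCS t [set x; y].
Proof.
move=> exy sep; apply/existsP; exists x; apply/existsP; exists y.
by rewrite exy eqxx sep.
Qed.

Lemma mk_sep t x y s s' : s != t -> s' != t -> x \in @bag _ D s -> y \in @bag _ D s' ->
  ~~ connect (@tadj_minus _ D t) s s' -> @separated _ D t x y.
Proof.
move=> h1 h2 h3 h4 h5; apply/existsP; exists s; apply/existsP; exists s'.
by rewrite h1 h2 h3 h4 h5.
Qed.

Lemma key a (ha : a.+1 < N) s1 s2 : s1 != s2 ->
  (inl (Ordinal (ltnW ha)) : V) \in @bag _ D s1 -> (inl (Ordinal ha) : V) \in @bag _ D s2 -> False.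
Proof.
move=> s12 h1 h2.
case: hD => [[_ _ symr conn acyc] dis cov].
have hb : a < N.-1 by rewrite -ltnS prednK // (leq_trans _ ha).
set ua : V := inl (Ordinal (ltnW ha)).
set ub : V := inl (Ordinal ha).
pose v (j : 'I_N) : V := inr (Ordinal hb, j).
have eua j : e ua (v j) by rewrite /= /tp_uv /= eqxx.
have evb j : e (v j) ub by rewrite /= /tp_uv /= eqxx orbT.
have vinj : injective v by move=> j j' [].
pose E j := [set ua; v j].
pose E' j := [set v j; ub].
have Einj : injective E.
  move=> j j' hE; have : v j \in E j' by rewrite -hE !inE eqxx orbT.
  by rewrite !inE => /orP[/eqP //| /eqP /vinj].
have E'inj : injective E'.
  move=> j j' hE; have : v j \in E' j' by rewrite -hE !inE eqxx.
  by rewrite !inE => /orP[/eqP /vinj //| /eqP].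
have cT t := sym_connect_sym (@rm_sym _ D symr t).
have /connectP[p pp hp] := conn s1 s2.
case: (shortenP pp) hp => p' pp' up' _ hp.
case: p' pp' up' hp => [|y P] pp' up' hp.
  by move: s12; rewrite hp eqxx.
case: (eqVneq P [::]) => [Pnil | Pn].
-
  subst P; rewrite /= in hp; subst y.
  have r12 : tadj s1 s2 by move: pp' => /= /andP[].
  have s21 : s2 != s1 by rewrite eq_sym.
  have cls : forall j, [|| j \in [set j | v j \in @bag _ D s1],
        j \in [set j | v j \in @bag _ D s2],
        j \in [set j | inCS s1 (E' j)] | j \in [set j | inCS s2 (E j)]].
    move=> j; rewrite !inE.
    have [s hs] := loc_ex (v j).
    case: (eqVneq s s1) => [<-|ss1]; first by rewrite hs.
    case: (eqVneq s s2) => [<-|ss2]; first by rewrite hs orbT.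
    case c1 : (connect (tadj_minus s1) s s2).
      case c2 : (connect (tadj_minus s2) s s1).
        by case: (@adjacent _ D symr acyc _ _ _ r12 ss1 ss2 c1 c2).
      apply/orP; right; apply/orP; right; apply/orP; right.
      apply: memCS => //; apply: (@mk_sep _ _ _ s1 s) => //.
      by rewrite cT c2.
    apply/orP; right; apply/orP; right; apply/orP; left.
    apply: memCS => //; apply: (@mk_sep _ _ _ s s2) => //.
    by rewrite c1.
  have := @count4 _ _ _ _ cls.
  have c1 : #|[set j | v j \in @bag _ D s1]| <= #|@bag _ D s1|.
    by apply: card_bag_le vinj _ => j; rewrite inE.
  have c2 : #|[set j | v j \in @bag _ D s2]| <= #|@bag _ D s2|.
    by apply: card_bag_le vinj _ => j; rewrite inE.
  have c3 : #|[set j | inCS s1 (E' j)]| <= @cross _ e D s1.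
    by apply: card_cs_le E'inj _ => j; rewrite inE.
  have c4 : #|[set j | inCS s2 (E j)]| <= @cross _ e D s2.
    by apply: card_cs_le Einj _ => j; rewrite inE.
  move=> /leq_trans /(_ (leq_add (leq_add (leq_add c1 c2) c3) c4)).
  move: (hbag s1) (hbag s2) (hcr s1) (hcr s2).
  move: (#|@bag _ D s1|) (#|@bag _ D s2|) (@cross _ e D s1) (@cross _ e D s2).
  clear; lia.
- have hsep : ~~ connect (tadj_minus y) s1 s2.
    by apply: (@interior _ D symr acyc s1 y P s2) => //; rewrite hp.
  have s1y : s1 != y by move: up' => /= /andP[]; rewrite !inE negb_or => /andP[].
  have s2y : s2 != y.
    move: up' => /= /andP[_ /andP[yP _]]; apply/eqP => e2.
    by move: yP; rewrite -e2 hp /= last_in.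
  have cls : forall j, [|| j \in [set j | v j \in @bag _ D y],
        j \in [set j | inCS y (E j)],
        j \in [set j | inCS y (E' j)] | j \in (set0 : {set 'I_N})].
    move=> j; rewrite !inE.
    have [s hs] := loc_ex (v j).
    case: (eqVneq s y) => [<-|sy]; first by rewrite hs.
    case c1 : (connect (tadj_minus y) s1 s).
      apply/orP; right; apply/orP; right; apply/orP; left.
      apply: memCS => //; apply: (@mk_sep _ _ _ s s2) => //.
      apply/negP => c2; move/negP: hsep; apply.
      exact: connect_trans c1 c2.
    apply/orP; right; apply/orP; left.
    apply: memCS => //; apply: (@mk_sep _ _ _ s1 s) => //.
    by rewrite c1.
  have := @count4 _ _ _ _ cls.
  have c1 : #|[set j | v j \in @bag _ D y]| <= #|@bag _ D y|.
    by apply: card_bag_le vinj _ => j; rewrite inE.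
  have c3 : #|[set j | inCS y (E' j)]| <= @cross _ e D y.
    by apply: card_cs_le E'inj _ => j; rewrite inE.
  have c2 : #|[set j | inCS y (E j)]| <= @cross _ e D y.
    by apply: card_cs_le Einj _ => j; rewrite inE.
  rewrite cards0 addn0.
  move=> /leq_trans /(_ (leq_add (leq_add c1 c2) c3)).
  move: (hbag y) (hcr y).
  move: (#|@bag _ D y|) (@cross _ e D y).
  clear; lia.
Qed.
Lemma main_false : False.
Proof.
have hN : 0 < N by rewrite muln_gt0 hk.
have [s0 hs0] := loc_ex (inl (Ordinal hN)).
have step : forall a (ha : a < N), (inl (Ordinal ha) : V) \in @bag _ D s0.
  elim => [|a IH] ha.
    by have -> : Ordinal ha = Ordinal hN by apply: val_inj.
  have [s hs] := loc_ex (inl (Ordinal ha)).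
  case: (eqVneq s0 s) => [-> //|ne].
  by case: (@key a ha s0 s ne (IH (ltnW ha)) hs).
have : #|[set: 'I_N]| <= #|@bag _ D s0|.
  apply: (@card_bag_le s0 (fun j : 'I_N => (inl j : V)) setT) => [x y [] //|j _].
  have -> : j = Ordinal (ltn_ord j) by apply: val_inj.
  exact: step.
rewrite cardsT card_ord; move: (hbag s0); move: (#|@bag _ D s0|); clear; lia.
Qed.

End Main.

Theorem lemma3p14 (k : nat) :
  0 < k -> k <= ecrw (thickened_path_adj (4 * k)).
Proof.
move=> hk; rewrite /ecrw; case: ex_minnP => m /asboolP [D [hD <-]] _.
rewrite /ecr_width leq_max.
case: (leqP k (crossing_number (thickened_path_adj (4 * k)) D)) => //= hc.
case: (leqP k (thickness D)) => // ht.
exfalso.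
have hb : forall t, #|@bag _ D t| < k.
  move=> t; apply: leq_ltn_trans ht; exact: (leq_bigmax t).
have hcr : forall t, @cross _ (thickened_path_adj (4 * k)) D t < k.
  move=> t; apply: leq_ltn_trans hc; exact: (leq_bigmax t).
exact: (@main_false k hk D hD hb hcr).
Qed.
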